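(* Let $\Gamma=\Gamma(S_{d_0},HF)$ be a finitely generated saturated directed group acting on $T_{\bar d}$ with $\bar d$ bounded by $D$. There is a constant $C$ depending only on $D$ and $\#HF$ such that for every integer $r\ge0$, $$\#\{\gamma\in\Gamma:\ \text{there is an alternate word } w \text{ representing }\gamma\text{ with } a(w)\le r\}\le C^r.$$
   Context: $\bar d=(d_j)_{j\ge0}$ is a bounded sequence of integers $d_j\ge2$, $D=\max_j d_j$, and $\sigma\bar d=(d_1,d_2,\dots)$. $T_{\bar d}$ is the spherically homogeneous rooted tree with vertices the finite sequences $i_1\dots i_k$, $i_j\in\{1,\dots,d_{j-1}\}$; $\partial T_{\bar d}$ is its boundary; $1^\infty=111\dots$. Products of automorphisms follow $(gf)(x)=f(g(x))$. Each $g\in\mathrm{Aut}(T_{\bar d})$ is written $g=(g_1,\dots,g_{d_0})\tau$ ($g_t\in\mathrm{Aut}(T_{\sigma\bar d})$, $\tau\in S_{d_0}$, $g(ty)=\tau(t)g_t(y)$); $g$ is rooted if all $g_t=1$, and rooted automorphisms form a copy of $S_{d_0}$. $H_{\bar d}$ is defined recursively: $h\in H_{\bar d}$ iff $h=(h',\sigma_2,\dots,\sigma_{d_0})$ (trivial root permutation) with $h'\in H_{\sigma\bar d}$ and $\sigma_2,\dots,\sigma_{d_0}$ rooted automorphisms of $T_{\sigma\bar d}$; this gives $H_{\bar d}\cong\prod_{l\ge1}S_{d_l}^{\,d_{l-1}-1}$, the coordinates $\sigma_2,\dots,\sigma_{d_0}$ giving the $d_0-1$ factors $S_{d_1}$ and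 the other factors coming recursively from $h'$. Let $F$ be a finite group; $F\wr_{\partial T_{\bar d}}\mathrm{Aut}(T_{\bar d})=\{\varphi:\partial T_{\bar d}\to F\}\rtimes\mathrm{Aut}(T_{\bar d})$ with $(g.\varphi)(x)=\varphi(g(x))$ and $(\varphi g)(\varphi'g')=\varphi(g.\varphi')gg'$; for $f\in F$, $\varphi_f$ is the function equal to $f$ at $1^\infty$ and trivial elsewhere (it commutes with $H_{\bar d}$). A finitely generated saturated directed group $\Gamma(S_{d_0},HF)$ is the subgroup of $F\wr_{\partial T_{\bar d}}\mathrm{Aut}(T_{\bar d})$ generated by the rooted group $S_{d_0}$, a finite subgroup $H\le H_{\bar d}$ such that the pushforward of the uniform measure on $H$ to each factor $S_{d_l}$ is uniform, and $\{\varphi_f:f\in F\}$; $HF=\{h\varphi_f\}\cong H\times F$ is a finite subgroup. An alternate word is a word $w=s_1k_1s_2k_2\cdots s_nk_ns_{n+1}$ with $s_i\in S_{d_0}$, $k_i\in HF$; writing $k_j=\varphi_{f_j}h_j$, let $g_j=s_1h_1s_2h_2\cdots h_{j-1}s_j\in\mathrm{Aut}(T_{\bar d})$. The activity of $w$ is $a(w)=\#\{g_j^{-1}(1^\infty):1\le j\le n\}$ (so $a(w)=0$ when $n=0$). *)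

(* Defs.v *)
From HB Require Import structures.
From mathcomp Require Import all_boot all_fingroup.
From Stdlib Require Import ClassicalEpsilon.

Set Implicit Arguments.
Unset Strict Implicit.
Unset Printing Implicit Defensive.

(* Conventions:
   - the sequence d_0, d_1, ... is a function d : nat -> nat;
   - letters at level j are 0-based: {0, ..., d j - 1}; the paper's letter 1
     is our letter 0, so the paper's ray 1^oo is the constant-0 sequence;
   - a boundary point of T_d is a sequence x : nat -> nat with x j < d j. *)

Definition bpt := nat -> nat.

Definition valid_pt (d : nat -> nat) (x : bpt) : Prop := forall j, x j < d j.

Definition one_pt : bpt := fun _ => 0.

Definition pb (P : Prop) : bool :=
  if excluded_middle_informative P then true else false.

(* A permutation of 'I_n acting on a letter (letters >= n are left fixed;
   this never happens for valid points). *)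
Definition permn (n : nat) (s : {perm 'I_n}) (k : nat) : nat :=
  oapp (fun i : 'I_n => val (s i)) k (insub k).

Definition root_act (d : nat -> nat) (s : {perm 'I_(d 0)}) (x : bpt) : bpt :=
  fun j => if j == 0 then permn s (x 0) else x j.

(* Elements of H_d = prod_{l>=1} S_{d_l}^{d_{l-1}-1}: for every level l and
   every letter t <> 0 (paper: t in {2..d_{l}}) of the alphabet at level l, a
   permutation sigma_{l,t} of the alphabet at level l+1.  The value at t = 0
   is irrelevant (never used). *)
Definition Hd (d : nat -> nat) := forall l : nat, 'I_(d l) -> {perm 'I_(d l.+1)}.

(* Action of h in H_d on boundary points (recursive definition unfolded):
   if x = 0^l t y with t <> 0, then the letter at position l+1 is permuted by
   sigma_{l,t}; all other letters (and the point 0^oo) are fixed. *)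
Definition hact (d : nat -> nat) (h : Hd d) (x : bpt) : bpt :=
  fun j =>
    match j with
    | 0 => x 0
    | l.+1 =>
        if [forall i : 'I_l, x i == 0] && (x l != 0) then
          oapp (fun t : 'I_(d l) => permn (h l t) (x l.+1)) (x l.+1) (insub (x l))
        else x l.+1
    end.

Definition hinv (d : nat -> nat) (h : Hd d) : Hd d := fun l t => ((h l t)^-1)%g.

(* H <= H_d finite subgroup, presented as a finite group hT with an injective
   homomorphism rho : hT -> H_d. *)
Definition Hd_morph (d : nat -> nat) (hT : finGroupType) (rho : hT -> Hd d) : Prop :=
  forall (a b : hT) (l : nat) (t : 'I_(d l)), val t != 0 ->
    rho (a * b)%g l t = (rho a l t * rho b l t)%g.

Definition Hd_inj (d : nat -> nat) (hT : finGroupType) (rho : hT -> Hd d) : Prop :=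
  forall a b : hT,
    (forall (l : nat) (t : 'I_(d l)), val t != 0 -> rho a l t = rho b l t) -> a = b.

(* The pushforward of the uniform measure on H to each factor S_{d_{l+1}}
   (indexed by (l,t), t <> 0) is uniform. *)
Definition Hd_uniform (d : nat -> nat) (hT : finGroupType) (rho : hT -> Hd d) : Prop :=
  forall (l : nat) (t : 'I_(d l)), val t != 0 ->
    forall s : {perm 'I_(d l.+1)},
      #|[set a : hT | rho a l t == s]| * (d l.+1)`! = #|hT|.

(* Elements of F wr_{boundary} Aut(T_d): pairs (phi, g) with
   phi : boundary -> F and g acting on the boundary. *)
Definition elt (fT : finGroupType) := ((bpt -> fT) * (bpt -> bpt))%type.

(* Product (phi g)(phi' g') = phi (g.phi') g g', with (g.phi')(x) = phi'(g x)
   and (g g')(x) = g'(g x). *)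
Definition emul (fT : finGroupType) (a b : elt fT) : elt fT :=
  (fun x => (a.1 x * b.1 (a.2 x))%g, fun x => b.2 (a.2 x)).

Definition eeq (d : nat -> nat) (fT : finGroupType) (a b : elt fT) : Prop :=
  forall x, valid_pt d x -> a.1 x = b.1 x /\ (forall j, a.2 x j = b.2 x j).

Definition phi_f (fT : finGroupType) (f : fT) : bpt -> fT :=
  fun x => if pb (forall j, x j = one_pt j) then f else 1%g.

Definition erooted (d : nat -> nat) (fT : finGroupType) (s : {perm 'I_(d 0)}) : elt fT :=
  (fun _ => 1%g, root_act s).

Definition eHF (d : nat -> nat) (fT hT : finGroupType) (rho : hT -> Hd d)
  (a : hT) (f : fT) : elt fT := (phi_f f, hact (rho a)).

(* An alternate word w = s_1 k_1 s_2 k_2 ... s_n k_n s_{n+1} is encoded by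
   s_1 and the list ks = [(k_1, s_2); ...; (k_n, s_{n+1})], each k_j given
   by a pair (a_j, f_j) in hT * F, i.e. k_j = phi_{f_j} rho(a_j). *)
Definition weval (d : nat -> nat) (fT hT : finGroupType) (rho : hT -> Hd d)
  (s1 : {perm 'I_(d 0)}) (ks : seq ((hT * fT) * {perm 'I_(d 0)})) : elt fT :=
  foldl (fun e p => emul (emul e (eHF rho p.1.1 p.1.2)) (erooted fT p.2))
        (erooted fT s1) ks.

(* g_j^{-1}(1^oo) for the j-th letter k (0-based j), where
   g_j = s_1 h_1 s_2 ... h_{j-1} s_j, so
   g_j^{-1} = s_j^{-1} h_{j-1}^{-1} ... h_1^{-1} s_1^{-1} (applied left to right). *)
Definition ginv_pt (d : nat -> nat) (fT hT : finGroupType) (rho : hT -> Hd d)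
  (s1 : {perm 'I_(d 0)}) (ks : seq ((hT * fT) * {perm 'I_(d 0)})) (j : nat) : bpt :=
  root_act (s1^-1)%g
    (foldr (fun p y => hact (hinv (rho p.1.1)) (root_act (p.2^-1)%g y))
           one_pt (take j ks)).

Definition ndistinct (n : nat) (p : 'I_n -> bpt) : nat :=
  #|[set j : 'I_n | pb (forall j' : 'I_n, j' < j -> ~ (forall i, p j' i = p j i))]|.

Definition activity (d : nat -> nat) (fT hT : finGroupType) (rho : hT -> Hd d)
  (s1 : {perm 'I_(d 0)}) (ks : seq ((hT * fT) * {perm 'I_(d 0)})) : nat :=
  ndistinct (fun j : 'I_(size ks) => ginv_pt rho s1 ks j).

(* Main.v *)
Require Import Defs.
From HB Require Import structures.
From mathcomp Require Import all_boot all_fingroup.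
From Stdlib Require Import FunctionalExtensionality ClassicalEpsilon.
From mathcomp Require Import zify.

Set Implicit Arguments.
Unset Strict Implicit.
Unset Printing Implicit Defensive.

Lemma pbP (P : Prop) : reflect P (pb P).
Proof. rewrite /pb; case: excluded_middle_informative => h; constructor => //. Qed.

Lemma pb_iff (P Q : Prop) : (P <-> Q) -> pb P = pb Q.
Proof. move=> [h1 h2]; apply/idP/idP => /pbP h; apply/pbP; tauto. Qed.

Definition bpt_eqb (x y : bpt) : bool := pb (x = y).
Lemma bpt_eqP : Equality.axiom bpt_eqb.
Proof. move=> x y; exact: pbP. Qed.
HB.instance Definition _ := hasDecEq.Build bpt bpt_eqP.

Definition pcons (c : nat) (y : bpt) : bpt := fun j => if j is k.+1 then y k else c.
Definition ptail (x : bpt) : bpt := fun j => x j.+1.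

Lemma pcons_eta (x : bpt) : x = pcons (x 0) (ptail x).
Proof. by apply: functional_extensionality => -[]. Qed.

Lemma ptail_pcons c y : ptail (pcons c y) = y.
Proof. by []. Qed.

Lemma pcons_inj c c' y y' : pcons c y = pcons c' y' -> c = c' /\ y = y'.
Proof.
move=> e; split; first by have := congr1 (fun z : bpt => z 0) e.
by have := congr1 ptail e.
Qed.

Lemma pcons0_one : pcons 0 one_pt = one_pt.
Proof. by apply: functional_extensionality => -[]. Qed.

Lemma pcons_eq_one c y : (pcons c y = one_pt) <-> (c = 0 /\ y = one_pt).
Proof.
split; last by case=> -> ->; exact: pcons0_one.
move=> e; have e' : pcons c y = pcons 0 one_pt by rewrite pcons0_one.
by case: (pcons_inj e').
Qed.

Lemma permnE n (s : {perm 'I_n}) (i : 'I_n) : permn s i = s i.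
Proof. by rewrite /permn valK. Qed.

Lemma permn_ge n (s : {perm 'I_n}) k : n <= k -> permn s k = k.
Proof. by move=> h; rewrite /permn insubN // -leqNgt h. Qed.

Lemma permn_case n (s : {perm 'I_n}) (k : nat) :
  (exists i : 'I_n, k = i /\ permn s k = s i) \/ (n <= k /\ permn s k = k).
Proof.
case: (ltnP k n) => h; last by right; rewrite permn_ge.
by left; exists (Ordinal h); split => //; exact: (permnE s (Ordinal h)).
Qed.

Lemma permnM n (s t : {perm 'I_n}) k : permn (s * t)%g k = permn t (permn s k).
Proof.
case: (permn_case (s * t)%g k) => [[i [-> ->]]|[h ->]].
  by rewrite !permnE permM.
by rewrite !permn_ge.
Qed.

Lemma permn1 n k : permn (1%g : {perm 'I_n}) k = k.
Proof.
case: (permn_case (1%g : {perm 'I_n}) k) => [[i [-> ->]]|[h ->]] //.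
by rewrite perm1.
Qed.

Lemma permnK n (s : {perm 'I_n}) k : permn (s^-1)%g (permn s k) = k.
Proof. by rewrite -permnM mulgV permn1. Qed.

Lemma permnKV n (s : {perm 'I_n}) k : permn s (permn (s^-1)%g k) = k.
Proof. by rewrite -permnM mulVg permn1. Qed.

Lemma permn_inj n (s : {perm 'I_n}) : injective (permn s).
Proof. exact: can_inj (permnK s). Qed.

Lemma permn_lt n (s : {perm 'I_n}) k : (permn s k < n) = (k < n).
Proof.
case: (permn_case s k) => [[i [-> ->]]|[h ->]] //.
by rewrite !ltn_ord.
Qed.

Lemma root_act_pcons d (s : {perm 'I_(d 0)}) c y :
  root_act s (pcons c y) = pcons (permn s c) y.
Proof. by apply: functional_extensionality => -[]. Qed.

Lemma root_actM d (s t : {perm 'I_(d 0)}) x :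
  root_act (s * t)%g x = root_act t (root_act s x).
Proof. by apply: functional_extensionality => -[|j] /=; rewrite /root_act //= permnM. Qed.

Lemma root_act1 d x : root_act (1%g : {perm 'I_(d 0)}) x = x.
Proof. by apply: functional_extensionality => -[|j] /=; rewrite /root_act //= permn1. Qed.

Lemma root_actK d (s : {perm 'I_(d 0)}) x : root_act (s^-1)%g (root_act s x) = x.
Proof. by rewrite -root_actM mulgV root_act1. Qed.

Lemma root_actKV d (s : {perm 'I_(d 0)}) x : root_act s (root_act (s^-1)%g x) = x.
Proof. by rewrite -root_actM mulVg root_act1. Qed.

Definition sd (d : nat -> nat) : nat -> nat := fun j => d j.+1.
Definition shiftH d (h : Hd d) : Hd (sd d) := fun l t => h l.+1 t.
Definition hmul d (h1 h2 : Hd d) : Hd d := fun l t => (h1 l t * h2 l t)%g.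

Lemma forallzP (x : bpt) l : reflect (forall i, i < l -> x i = 0) [forall i : 'I_l, x i == 0].
Proof.
apply: (iffP forallP) => H i; last by apply/eqP; apply: H.
by move=> hi; apply/eqP; exact: (H (Ordinal hi)).
Qed.

Lemma hact_pcons0 d (h : Hd d) y : hact h (pcons 0 y) = pcons 0 (hact (shiftH h) y).
Proof.
apply: functional_extensionality => -[|[|l]] //=.
  by rewrite /hact /= andbF.
rewrite /hact /=.
have -> : [forall i : 'I_l.+1, pcons 0 y i == 0] = [forall i : 'I_l, y i == 0].
  apply/forallzP/forallzP => H i hi; first exact: (H i.+1 hi).
  by case: i hi => // i hi; apply: H.
by [].
Qed.

Lemma hact_pconsN d (h : Hd d) (c : nat) (hc : c < d 0) y : c != 0 ->
  hact h (pcons c y) = pcons c (@root_act (sd d) (h 0 (Ordinal hc)) y).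
Proof.
move=> cn0; apply: functional_extensionality => -[|[|l]] //=.
  rewrite /hact /= cn0 andbT.
  have -> : [forall i : 'I_0, pcons c y i == 0] by apply/forallP => -[].
  by rewrite insubT.
rewrite /hact /=.
have -> : [forall i : 'I_l.+1, pcons c y i == 0] = false.
  by apply/negbTE/negP => /forallzP H; move: (H 0 erefl) => /= /eqP; rewrite (negbTE cn0).
by [].
Qed.

Lemma hact_pconsB d (h : Hd d) (c : nat) y : d 0 <= c -> c != 0 ->
  hact h (pcons c y) = pcons c y.
Proof.
move=> hc cn0; apply: functional_extensionality => -[|[|l]] //=.
  rewrite /hact /= cn0 andbT insubN; first by case: ifP.
  by rewrite -leqNgt.
rewrite /hact /=.
have -> : [forall i : 'I_l.+1, pcons c y i == 0] = false.
  by apply/negbTE/negP => /forallzP H; move: (H 0 erefl) => /= /eqP; rewrite (negbTE cn0).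
by [].
Qed.

Lemma hact0 d (h : Hd d) x : hact h x 0 = x 0.
Proof. by []. Qed.

Lemma hactM d (h1 h2 : Hd d) x : hact h2 (hact h1 x) = hact (hmul h1 h2) x.
Proof.
apply: functional_extensionality => j.
elim: j d h1 h2 x => [|j IH] d h1 h2 x; first by [].
rewrite (pcons_eta x); set c := x 0; set y := ptail x.
case: (eqVneq c 0) => [->|cn0].
  by rewrite !hact_pcons0 /=; apply: IH.
case: (ltnP c (d 0)) => hc.
  by rewrite !(hact_pconsN _ hc) // -root_actM.
by rewrite !hact_pconsB.
Qed.

Lemma hact_ext d (h h' : Hd d) x :
  (forall l (t : 'I_(d l)), val t != 0 -> h l t = h' l t) -> hact h x = hact h' x.
Proof.
move=> H; apply: functional_extensionality => j.
elim: j d h h' H x => [|j IH] d h h' H x; first by [].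
rewrite (pcons_eta x); set c := x 0; set y := ptail x.
case: (eqVneq c 0) => [->|cn0].
  by rewrite !hact_pcons0 /=; apply: IH => l t; apply: H.
case: (ltnP c (d 0)) => hc.
  by rewrite !(hact_pconsN _ hc) // H.
by rewrite !hact_pconsB.
Qed.

Lemma hact_id d (h : Hd d) x :
  (forall l (t : 'I_(d l)), val t != 0 -> h l t = 1%g) -> hact h x = x.
Proof.
move=> H; apply: functional_extensionality => j.
elim: j d h H x => [|j IH] d h H x; first by [].
rewrite (pcons_eta x); set c := x 0; set y := ptail x.
case: (eqVneq c 0) => [->|cn0].
  by rewrite !hact_pcons0 /=; apply: IH => l t; apply: H.
case: (ltnP c (d 0)) => hc.
  by rewrite !(hact_pconsN _ hc) // H // root_act1.
by rewrite !hact_pconsB.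
Qed.

Lemma hactK d (h : Hd d) x : hact (hinv h) (hact h x) = x.
Proof. by rewrite hactM hact_id // => l t _; rewrite /hmul /hinv mulgV. Qed.

Lemma hactKV d (h : Hd d) x : hact h (hact (hinv h) x) = x.
Proof. by rewrite hactM hact_id // => l t _; rewrite /hmul /hinv mulVg. Qed.

Lemma hact_one d (h : Hd d) : hact h one_pt = one_pt.
Proof. by apply: functional_extensionality => -[|l] //; rewrite /hact /one_pt /= andbF. Qed.

Lemma hact_eq_one d (h : Hd d) x : (hact h x = one_pt) <-> (x = one_pt).
Proof.
split => [e|->]; last exact: hact_one.
by rewrite -(hactK h x) e hact_one.
Qed.

Lemma card_set_sum n (P : pred 'I_n) : #|[set j | P j]| = \sum_(j < n) P j.
Proof.
rewrite -sum1_card big_mkcond /=; apply: eq_bigr => i _.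
by rewrite inE; case: (P i).
Qed.

Lemma size_undup_rcons (T : eqType) (s : seq T) x :
  size (undup (rcons s x)) = size (undup s) + (x \notin s).
Proof.
rewrite undup_rcons size_rcons size_filter.
have u := undup_uniq s.
have := count_predC (predC1 x) (undup s).
have -> : count (predC (predC1 x)) (undup s) = count_mem x (undup s).
  by apply: eq_count => y /=; rewrite negbK.
rewrite (count_uniq_mem _ u) mem_undup.
have -> : count (fun y => y != x) (undup s) = count (predC1 x) (undup s) by [].
by case: (x \in s) => /=; lia.
Qed.

Lemma ndistinctE (f : nat -> bpt) n :
  ndistinct (fun j : 'I_n => f j) = size (undup [seq f j | j <- iota 0 n]).
Proof.
rewrite /ndistinct card_set_sum.
have E : forall j : 'I_n,
    pb (forall j' : 'I_n, j' < j -> ~ (forall i, f j' i = f j i))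
    = pb (forall j' : nat, j' < j -> f j' <> f j).
  move=> j; apply: pb_iff; split => H j' hj'.
    have hj'n : j' < n by apply: ltn_trans hj' (ltn_ord j).
    move=> e; apply: (H (Ordinal hj'n) hj') => i; by rewrite e.
  move=> e; apply: (H j' hj'); exact: functional_extensionality.
rewrite (eq_bigr _ (fun j _ => congr1 nat_of_bool (E j))).
elim: n {E} => [|n IH]; first by rewrite big_ord0.
rewrite big_ord_recr IH.
have -> : iota 0 n.+1 = rcons (iota 0 n) n by rewrite -cats1 -addn1 iotaD.
rewrite map_rcons size_undup_rcons.
congr addn; congr nat_of_bool.
apply/pbP/idP.
  move=> H; apply/mapP => -[j]; rewrite mem_iota add0n => /andP[_ hj] e.
  by apply: (H j hj); rewrite e.
move=> /negP H j hj e; apply: H; apply/mapP; exists j => //.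
by rewrite mem_iota.
Qed.

Section Words.
Variables (fT hT : finGroupType).

Definition eid : elt fT := (fun _ => 1%g, id).

Lemma emulA (a b c : elt fT) : emul (emul a b) c = emul a (emul b c).
Proof.
rewrite /emul /=; congr pair; apply: functional_extensionality => x; by rewrite mulgA.
Qed.

Lemma emul_e1 (a : elt fT) : emul a eid = a.
Proof.
case: a => f g; rewrite /emul /=; congr pair; apply: functional_extensionality => x.
by rewrite mulg1.
Qed.

Lemma erooted1 d : erooted fT (1%g : {perm 'I_(d 0)}) = eid.
Proof. rewrite /erooted; congr pair; apply: functional_extensionality => x; exact: root_act1. Qed.

Lemma erootedM d (s t : {perm 'I_(d 0)}) :
  erooted fT (s * t)%g = emul (erooted fT s) (erooted fT t).
Proof.
rewrite /erooted /emul /=; congr pair; apply: functional_extensionality => x.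
  by rewrite mulg1.
exact: root_actM.
Qed.

Definition word d := ({perm 'I_(d 0)} * seq ((hT * fT) * {perm 'I_(d 0)}))%type.

Lemma weval_rcons d (rho : hT -> Hd d) s1 ks q :
  weval rho s1 (rcons ks q) =
  emul (emul (weval rho s1 ks) (eHF rho q.1.1 q.1.2)) (erooted fT q.2).
Proof. by rewrite /weval foldl_rcons. Qed.

Definition rootprod d (s1 : {perm 'I_(d 0)}) (ks : seq ((hT * fT) * {perm 'I_(d 0)})) :=
  foldl (fun t q => (t * q.2)%g) s1 ks.

Lemma rootprod_rcons d (s1 : {perm 'I_(d 0)}) ks q :
  rootprod s1 (rcons ks q) = (rootprod s1 ks * q.2)%g.
Proof. by rewrite /rootprod foldl_rcons. Qed.

Lemma weval_root d (rho : hT -> Hd d) s1 ks x :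
  (weval rho s1 ks).2 x 0 = permn (rootprod s1 ks) (x 0).
Proof.
elim/last_ind: ks => [|ks q IH]; first by [].
by rewrite weval_rcons rootprod_rcons permnM -IH.
Qed.

Definition Ginv d (rho : hT -> Hd d) (s1 : {perm 'I_(d 0)})
  (ks : seq ((hT * fT) * {perm 'I_(d 0)})) (y : bpt) : bpt :=
  root_act (s1^-1)%g
    (foldr (fun p y => hact (hinv (rho p.1.1)) (root_act (p.2^-1)%g y)) y ks).

Lemma ginv_ptE d (rho : hT -> Hd d) s1 ks j :
  ginv_pt rho s1 ks j = Ginv rho s1 (take j ks) one_pt.
Proof. by []. Qed.

Lemma Ginv_rcons d (rho : hT -> Hd d) s1 ks q y :
  Ginv rho s1 (rcons ks q) y =
  Ginv rho s1 ks (hact (hinv (rho q.1.1)) (root_act (q.2^-1)%g y)).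
Proof. by rewrite /Ginv foldr_rcons. Qed.

Lemma GK d (rho : hT -> Hd d) s1 ks y : (weval rho s1 ks).2 (Ginv rho s1 ks y) = y.
Proof.
elim/last_ind: ks y => [|ks q IH] y; first exact: root_actKV.
by rewrite weval_rcons Ginv_rcons /= IH hactKV root_actKV.
Qed.

Lemma GinvK d (rho : hT -> Hd d) s1 ks x : Ginv rho s1 ks ((weval rho s1 ks).2 x) = x.
Proof.
elim/last_ind: ks x => [|ks q IH] x; first exact: root_actK.
by rewrite weval_rcons Ginv_rcons /= root_actK hactK IH.
Qed.

Lemma Ginv0 d (rho : hT -> Hd d) s1 ks y :
  Ginv rho s1 ks y 0 = permn ((rootprod s1 ks)^-1)%g (y 0).
Proof. by rewrite -{2}(GK rho s1 ks y) weval_root permnK. Qed.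

Definition pts d (rho : hT -> Hd d) s1 ks : seq bpt :=
  [seq Ginv rho s1 (take j ks) one_pt | j <- iota 0 (size ks)].

Lemma pts_rcons d (rho : hT -> Hd d) s1 ks q :
  pts rho s1 (rcons ks q) = rcons (pts rho s1 ks) (Ginv rho s1 ks one_pt).
Proof.
rewrite /pts size_rcons.
have -> : iota 0 (size ks).+1 = rcons (iota 0 (size ks)) (size ks) by rewrite -cats1 -addn1 iotaD.
have e : take (size ks) (rcons ks q) = ks by rewrite -cats1 take_size_cat.
rewrite map_rcons e; congr rcons.
apply/eq_in_map => j; rewrite mem_iota add0n => /andP[_ hj].
by rewrite -cats1 takel_cat // ltnW.
Qed.

Lemma activityE d (rho : hT -> Hd d) s1 ks :
  activity rho s1 ks = size (undup (pts rho s1 ks)).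
Proof. by rewrite /activity (ndistinctE (fun j => ginv_pt rho s1 ks j)). Qed.

End Words.

Lemma phi_fE (fT : finGroupType) (f : fT) x :
  phi_f f x = if pb (x = one_pt) then f else 1%g.
Proof.
rewrite /phi_f (@pb_iff _ (x = one_pt)) //; split => [H|->//].
exact: functional_extensionality.
Qed.

Lemma phi_f_pcons0 (fT : finGroupType) (f : fT) z : phi_f f (pcons 0 z) = phi_f f z.
Proof.
rewrite !phi_fE (@pb_iff (pcons 0 z = one_pt) (z = one_pt)) //.
rewrite pcons_eq_one; tauto.
Qed.

Lemma phi_f_pconsN (fT : finGroupType) (f : fT) c z : c != 0 -> phi_f f (pcons c z) = 1%g.
Proof.
move=> cn0; rewrite phi_fE; case: pbP => // /pcons_eq_one [c0 _].
by rewrite c0 in cn0.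
Qed.

Section Sections.
Variables (fT hT : finGroupType).

Definition srho d (rho : hT -> Hd d) : hT -> Hd (sd d) := fun a => shiftH (rho a).

Definition sword d := ({perm 'I_(d 1)} * seq ((hT * fT) * {perm 'I_(d 1)}))%type.

Definition appR d (w : sword d) (s : {perm 'I_(d 1)}) : sword d :=
  match w.2 with
  | [::] => ((w.1 * s)%g, [::])
  | (k, t) :: r => (w.1, (k, (t * s)%g) :: r)
  end.

Definition appK d (w : sword d) (k : hT * fT) : sword d := (w.1, (k, 1%g) :: w.2).

Definition sigma_at d (rho : hT -> Hd d) (a : hT) (c : nat) : {perm 'I_(d 1)} :=
  oapp (fun t : 'I_(d 0) => rho a 0 t) 1%g (insub c).

Definition sec_step d (rho : hT -> Hd d) (st : nat * sword d)
  (q : (hT * fT) * {perm 'I_(d 0)}) : nat * sword d :=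
  (permn q.2 st.1,
   if st.1 == 0 then appK st.2 q.1 else appR st.2 (sigma_at rho q.1.1 st.1)).

Definition secst d (rho : hT -> Hd d) (s1 : {perm 'I_(d 0)})
  (ks : seq ((hT * fT) * {perm 'I_(d 0)})) (i : nat) : nat * sword d :=
  foldl (sec_step rho) (permn s1 i, (1%g, [::])) ks.

Definition sweval d (rho : hT -> Hd d) (w : sword d) : elt fT :=
  weval (srho rho) w.1 (rev w.2).

Definition spts d (rho : hT -> Hd d) (w : sword d) : seq bpt :=
  pts (srho rho) w.1 (rev w.2).

Lemma sweval_appR d (rho : hT -> Hd d) w s :
  sweval rho (appR w s) = emul (sweval rho w) (@erooted (sd d) fT s).
Proof.
case: w => s0 [|[k t] r]; rewrite /sweval /appR /=.
  rewrite /weval /erooted /emul /=; congr pair; apply: functional_extensionality => x.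
    by rewrite mulg1.
  exact: (@root_actM (sd d) s0 s x).
rewrite !rev_cons !weval_rcons /= [RHS]emulA; congr emul.
rewrite /erooted /emul /=; congr pair; apply: functional_extensionality => x.
  by rewrite mulg1.
exact: (@root_actM (sd d) t s x).
Qed.

Lemma sweval_appK d (rho : hT -> Hd d) w k :
  sweval rho (appK w k) = emul (sweval rho w) (eHF (srho rho) k.1 k.2).
Proof.
case: w => s0 r; rewrite /sweval /appK /= rev_cons weval_rcons /=.
have -> : erooted fT (1%g : {perm 'I_(sd d 0)}) = eid fT by exact: (@erooted1 fT (sd d)).
by rewrite emul_e1.
Qed.

Lemma spts_appK d (rho : hT -> Hd d) w k :
  spts rho (appK w k) = rcons (spts rho w) (Ginv (srho rho) w.1 (rev w.2) one_pt).
Proof. by case: w => s0 r; rewrite /spts /appK /= rev_cons pts_rcons. Qed.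

Lemma spts_appR d (rho : hT -> Hd d) w s : spts rho (appR w s) = spts rho w.
Proof.
case: w => s0 [|[k t] r]; rewrite /spts /appR //=.
by rewrite !rev_cons !pts_rcons.
Qed.

Lemma secst_rcons d (rho : hT -> Hd d) s1 ks q i :
  secst rho s1 (rcons ks q) i = sec_step rho (secst rho s1 ks i) q.
Proof. by rewrite /secst foldl_rcons. Qed.

Lemma secst1 d (rho : hT -> Hd d) s1 ks i :
  (secst rho s1 ks i).1 = permn (rootprod s1 ks) i.
Proof.
elim/last_ind: ks => [|ks q IH] //.
by rewrite secst_rcons rootprod_rcons /= IH permnM.
Qed.

Lemma secP d (rho : hT -> Hd d) s1 ks (i : nat) : i < d 0 -> forall y,
  (weval rho s1 ks).2 (pcons i y) =
     pcons (secst rho s1 ks i).1 ((sweval rho (secst rho s1 ks i).2).2 y) /\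
  (weval rho s1 ks).1 (pcons i y) = (sweval rho (secst rho s1 ks i).2).1 y.
Proof.
move=> hi; elim/last_ind: ks => [|ks q IH] y.
  rewrite /sweval /=; split => //.
  by rewrite root_act_pcons (@root_act1 (sd d)).
have [IH2 IH1] := IH y.
have hc : (secst rho s1 ks i).1 < d 0 by rewrite secst1 permn_lt.
rewrite secst_rcons weval_rcons /sec_step.
move: hc IH1 IH2; set st := secst rho s1 ks i; case: st => c w /= hc IH1 IH2.
case: (eqVneq c 0) => [c0|cn0].
  subst c; rewrite sweval_appK /= IH2 IH1 hact_pcons0 root_act_pcons.
  by rewrite mulg1 phi_f_pcons0.
rewrite sweval_appR /= IH2 IH1 (hact_pconsN _ hc) // root_act_pcons.
by rewrite /sigma_at insubT /= phi_f_pconsN // !mulg1.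
Qed.

Lemma first_letter d (rho : hT -> Hd d) s1 (ks : seq ((hT * fT) * {perm 'I_(d 0)})) (i : nat) :
  (Ginv rho s1 ks one_pt 0 == i) = (permn (rootprod s1 ks) i == 0).
Proof.
rewrite Ginv0; apply/eqP/eqP => e.
  by rewrite -e permnKV.
have e' : one_pt 0 = permn (rootprod s1 ks) i by rewrite e.
by rewrite e' permnK.
Qed.

Lemma secpts d (rho : hT -> Hd d) s1 (ks : seq ((hT * fT) * {perm 'I_(d 0)})) (i : nat) : i < d 0 ->
  spts rho (secst rho s1 ks i).2 = [seq ptail p | p <- pts rho s1 ks & p 0 == i].
Proof.
move=> hi; elim/last_ind: ks => [|ks q IH] //.
rewrite secst_rcons pts_rcons filter_rcons first_letter -(secst1 rho s1 ks i).
have HP := secP rho s1 ks hi.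
move: IH HP; rewrite /sec_step; set st := secst rho s1 ks i; case: st => c w /= IH HP.
case: (eqVneq c 0) => [c0|cn0].
  subst c; rewrite /= spts_appK IH map_rcons; congr rcons.
  set y := Ginv _ _ _ _.
  have [e _] := HP y.
  rewrite GK pcons0_one in e.
  by rewrite -e GinvK.
by rewrite spts_appR IH.
Qed.

End Sections.

Lemma size_undup_map (T U : eqType) (f : T -> U) (s : seq T) :
  size (undup (map f s)) <= size (undup s).
Proof.
elim: s => [|x s IH] //=.
case hfx: (f x \in _); case hx: (x \in s) => /=; try lia.
by rewrite (map_f f hx) in hfx.
Qed.

Lemma sum_count_first (U : seq bpt) n :
  \sum_(i < n) count (fun p : bpt => p 0 == i) U <= size U.
Proof.
elim: U => [|x U IH]; first by rewrite big1.
rewrite /= big_split /=.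
have : \sum_(i < n) (x 0 == i) <= 1.
  elim: n {IH} => [|n IHn]; first by rewrite big_ord0.
  rewrite big_ord_recr /=.
  have : \sum_(i < n) (x 0 == i) = (x 0 < n).
    elim: n {IHn} => [|n IH']; first by rewrite big_ord0.
    rewrite big_ord_recr /= IH'.
    case: (ltngtP (x 0) n) => h.
    - by rewrite ltnS ltnW.
    - by rewrite ltnS leqNgt h.
    - by rewrite h ltnSn.
  by move=> ->; case: (ltngtP (x 0) n) => h.
by move=> h; rewrite -add1n; apply: leq_add.
Qed.

Lemma undup_le1 (T : eqType) (s : seq T) b : (forall p, p \in s -> p = b) -> size (undup s) <= 1.
Proof.
move=> H; have u := undup_uniq s.
have H' : forall p, p \in undup s -> p = b by move=> p; rewrite mem_undup; apply: H.
move: u H'; case: (undup s) => [|x [|y r]] //= u H'.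
have ex : x = b by apply: H'; rewrite inE eqxx.
have ey : y = b by apply: H'; rewrite !inE eqxx orbT.
move: u; rewrite ex ey inE eqxx /=.
by [].
Qed.

Section Activity.
Variables (fT hT : finGroupType).

Definition act d (rho : hT -> Hd d) (s1 : {perm 'I_(d 0)})
  (ks : seq ((hT * fT) * {perm 'I_(d 0)})) : nat := size (undup (pts rho s1 ks)).

Definition sec d (rho : hT -> Hd d) (s1 : {perm 'I_(d 0)})
  (ks : seq ((hT * fT) * {perm 'I_(d 0)})) (i : nat) : word fT hT (sd d) :=
  ((secst rho s1 ks i).2.1, rev (secst rho s1 ks i).2.2).

Lemma act_sec d (rho : hT -> Hd d) s1 (ks : seq ((hT * fT) * {perm 'I_(d 0)})) (i : nat) : i < d 0 ->
  act (srho rho) (sec rho s1 ks i).1 (sec rho s1 ks i).2 =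
  size (undup [seq ptail p | p <- pts rho s1 ks & p 0 == i]).
Proof. by move=> hi; rewrite /act -(secpts rho s1 ks hi). Qed.

Lemma act_sec_sum d (rho : hT -> Hd d) s1 (ks : seq ((hT * fT) * {perm 'I_(d 0)})) :
  \sum_(i < d 0) act (srho rho) (sec rho s1 ks i).1 (sec rho s1 ks i).2 <= act rho s1 ks.
Proof.
apply: leq_trans (sum_count_first _ (d 0)).
apply: leq_sum => i _; rewrite act_sec //.
apply: leq_trans (size_undup_map _ _) _.
by rewrite -filter_undup size_filter.
Qed.

Lemma act_sec_pos d (rho : hT -> Hd d) s1 (ks : seq ((hT * fT) * {perm 'I_(d 0)})) (i : nat) p : i < d 0 ->
  p \in pts rho s1 ks -> p 0 = i ->
  0 < act (srho rho) (sec rho s1 ks i).1 (sec rho s1 ks i).2.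
Proof.
move=> hi hp hpi; rewrite act_sec //.
have : ptail p \in undup [seq ptail p | p <- pts rho s1 ks & p 0 == i].
  by rewrite mem_undup; apply: map_f; rewrite mem_filter hpi eqxx.
by case: (undup _).
Qed.

Lemma pts_first d (rho : hT -> Hd d) s1 (ks : seq ((hT * fT) * {perm 'I_(d 0)})) :
  0 < d 0 -> forall p, p \in pts rho s1 ks -> p 0 < d 0.
Proof.
move=> hd p /mapP [j _ ->].
by rewrite Ginv0 permn_lt.
Qed.

Lemma pts_const d (rho : hT -> Hd d) s1 (ks : seq ((hT * fT) * {perm 'I_(d 0)})) e :
  (forall p, p \in pts rho s1 ks -> p 0 = e) ->
  forall p, p \in pts rho s1 ks -> p = Ginv rho s1 ([::] : seq ((hT * fT) * {perm 'I_(d 0)})) one_pt.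
Proof.
elim/last_ind: ks => [|ks q IH] //.
rewrite pts_rcons => H.
have H' : forall p, p \in pts rho s1 ks -> p 0 = e.
  by move=> p hp; apply: H; rewrite mem_rcons inE hp orbT.
have IH' := IH H'.
move=> p; rewrite mem_rcons inE => /orP [/eqP ->|]; last exact: IH'.
have HP : Ginv rho s1 ks one_pt 0 = e by apply: H; rewrite mem_rcons inE eqxx.
clear IH H; move: IH' H' HP; case/lastP: ks => [|ks0 q0] // IH' H' HP.
have hP' : Ginv rho s1 ks0 one_pt \in pts rho s1 (rcons ks0 q0) by rewrite pts_rcons mem_rcons inE eqxx.
rewrite -(IH' _ hP') Ginv_rcons.
set z := hact _ _.
have z0 : z 0 = permn (q0.2^-1)%g 0 by [].
case: (eqVneq (permn (q0.2^-1)%g 0) 0) => e0.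
  suff -> : z = one_pt by [].
  rewrite /z; apply/hact_eq_one.
  by rewrite {1}(pcons_eta one_pt) root_act_pcons e0 -pcons0_one.
exfalso.
have := H' _ hP'; rewrite -HP Ginv_rcons -/z !Ginv0 z0 => /permn_inj e1.
by rewrite -e1 in e0.
Qed.

Lemma sec_allin d (rho : hT -> Hd d) s1 (ks : seq ((hT * fT) * {perm 'I_(d 0)})) (i : nat) :
  (forall p, p \in pts rho s1 ks -> p 0 = i) ->
  (secst rho s1 ks i).2 = (1%g, rev [seq (q.1, 1%g) | q <- ks]).
Proof.
elim/last_ind: ks => [|ks q IH] //.
rewrite pts_rcons => H.
have H' : forall p, p \in pts rho s1 ks -> p 0 = i.
  by move=> p hp; apply: H; rewrite mem_rcons inE hp orbT.
have HP : Ginv rho s1 ks one_pt 0 == i by apply/eqP; apply: H; rewrite mem_rcons inE eqxx.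
rewrite first_letter -(secst1 rho s1 ks i) in HP.
rewrite secst_rcons /sec_step HP IH // map_rcons rev_rcons.
by [].
Qed.

Lemma sec_noin d (rho : hT -> Hd d) s1 (ks : seq ((hT * fT) * {perm 'I_(d 0)})) (i : nat) :
  (forall p, p \in pts rho s1 ks -> p 0 != i) ->
  (secst rho s1 ks i).2.2 = [::].
Proof.
elim/last_ind: ks => [|ks q IH] //.
rewrite pts_rcons => H.
have H' : forall p, p \in pts rho s1 ks -> p 0 != i.
  by move=> p hp; apply: H; rewrite mem_rcons inE hp orbT.
have HP : Ginv rho s1 ks one_pt 0 != i by apply: H; rewrite mem_rcons inE eqxx.
rewrite first_letter -(secst1 rho s1 ks i) in HP.
rewrite secst_rcons /sec_step (negbTE HP) /appR /=.
by move: (IH H'); case: (secst rho s1 ks i) => c [s0 r] /= ->.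
Qed.

End Activity.

Section Code.
Variables (fT hT : finGroupType).

Definition pureb d (s1 : {perm 'I_(d 0)}) (ks : seq ((hT * fT) * {perm 'I_(d 0)})) : bool :=
  (s1 == 1%g) && all (fun q => q.2 == 1%g) ks.

Definition prodH d (ks : seq ((hT * fT) * {perm 'I_(d 0)})) : hT :=
  foldl (fun a q => (a * q.1.1)%g) 1%g ks.
Definition prodF d (ks : seq ((hT * fT) * {perm 'I_(d 0)})) : fT :=
  foldl (fun a q => (a * q.1.2)%g) 1%g ks.

Lemma rho1 d (rho : hT -> Hd d) : Hd_morph rho ->
  forall l (t : 'I_(d l)), val t != 0 -> rho 1%g l t = 1%g.
Proof.
move=> Hm l t ht; have := Hm 1%g 1%g l t ht; rewrite mulg1 => e.
by apply: (mulgI (rho 1%g l t)); rewrite mulg1 -e.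
Qed.

Lemma srho_morph d (rho : hT -> Hd d) : Hd_morph rho -> Hd_morph (srho rho).
Proof. by move=> Hm a b l t ht; apply: Hm. Qed.

Lemma weval_pure d (rho : hT -> Hd d) s1 ks : Hd_morph rho -> pureb s1 ks ->
  weval rho s1 ks = eHF rho (prodH ks) (prodF ks).
Proof.
move=> Hm /andP [/eqP -> Hall].
elim/last_ind: ks Hall => [|ks q IH].
  move=> _; rewrite /weval /= /eHF /erooted /prodH /prodF /=; congr pair.
    by apply: functional_extensionality => x; rewrite phi_fE; case: pb.
  apply: functional_extensionality => x.
  by rewrite root_act1 hact_id // => l t ht; rewrite rho1.
rewrite all_rcons => /andP [/eqP q2 Hall].
rewrite weval_rcons IH // q2 erooted1 emul_e1.
rewrite /prodH /prodF !foldl_rcons -/(prodH ks) -/(prodF ks).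
rewrite /emul /eHF /=; congr pair; apply: functional_extensionality => x.
  rewrite !phi_fE (@pb_iff (hact _ x = one_pt) (x = one_pt)); last exact: hact_eq_one.
  by case: pb; rewrite ?mulg1.
rewrite hactM; apply: hact_ext => l t ht.
by rewrite /hmul Hm.
Qed.

Definition prk n (s : {perm 'I_n}) : nat := enum_rank s.
Definition keyk (a : hT) (f : fT) : nat := enum_rank a * #|fT| + enum_rank f.

Fixpoint code (n : nat) (d : nat -> nat) (rho : hT -> Hd d) (s1 : {perm 'I_(d 0)})
  (ks : seq ((hT * fT) * {perm 'I_(d 0)})) {struct n} : seq nat :=
  match n with
  | 0 => [::]
  | n'.+1 =>
    if ks is [::] then [:: 3 * prk s1]
    else if pureb s1 ks then [:: (3 * keyk (prodH ks) (prodF ks)).+1]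
    else (3 * prk (rootprod s1 ks)).+2 ::
         flatten [seq code n' (srho rho) (sec rho s1 ks i).1 (sec rho s1 ks i).2
                 | i : 'I_(d 0) <- enum 'I_(d 0)]
  end.

Definition mu d (rho : hT -> Hd d) (s1 : {perm 'I_(d 0)})
  (ks : seq ((hT * fT) * {perm 'I_(d 0)})) : nat :=
  if ks is [::] then 0 else if pureb s1 ks then 1 else (act rho s1 ks).*2.

Lemma act_nil d (rho : hT -> Hd d) s1 :
  act rho s1 ([::] : seq ((hT * fT) * {perm 'I_(d 0)})) = 0.
Proof. by []. Qed.

Lemma act_pos d (rho : hT -> Hd d) s1 (ks : seq ((hT * fT) * {perm 'I_(d 0)})) :
  ks != [::] -> 0 < act rho s1 ks.
Proof.
rewrite /act /pts; case: ks => [|q ks] //= _.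
case: ifP => // h; rewrite -mem_undup in h.
by case: (undup _) h.
Qed.

Lemma mu_le d (rho : hT -> Hd d) s1 ks : mu rho s1 ks <= (act rho s1 ks).*2.
Proof.
rewrite /mu; case: ks => [|q ks] //; case: ifP => // _.
have := act_pos rho s1 (ks := q :: ks) erefl; lia.
Qed.

Lemma sum2_le n (F : 'I_n -> nat) i j : i != j -> F i + F j <= \sum_(k < n) F k.
Proof.
move=> ij; rewrite (bigD1 i) //= (bigD1 j) //= ?(negbTE ij) //; last by rewrite eq_sym.
by rewrite addnA leq_addr.
Qed.

Lemma act1_struct d (rho : hT -> Hd d) s1 (ks : seq ((hT * fT) * {perm 'I_(d 0)})) :
  ks != [::] -> act rho s1 ks = 1 -> forall i : nat, i < d 0 ->
  ((sec rho s1 ks i).2 != [::] /\ pureb (sec rho s1 ks i).1 (sec rho s1 ks i).2) \/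
  (sec rho s1 ks i).2 = [::].
Proof.
move=> kn a1 i hi.
move: a1; rewrite /act; case E: (undup (pts rho s1 ks)) => [|x [|y r]] //= _.
have H : forall p, p \in pts rho s1 ks -> p = x.
  by move=> p; rewrite -mem_undup E inE => /eqP.
case: (eqVneq (x 0) i) => xi.
  left; rewrite /sec sec_allin; last by move=> p /H ->.
  rewrite /= revK; split; first by rewrite -size_eq0 size_map size_eq0.
  by rewrite /pureb eqxx /=; apply/allP => q /mapP [q' _ ->].
right; rewrite /sec sec_noin //.
by move=> p /H ->.
Qed.

Lemma act2_struct d (rho : hT -> Hd d) s1 (ks : seq ((hT * fT) * {perm 'I_(d 0)})) :
  0 < d 0 -> 1 < act rho s1 ks -> exists i1 i2 : 'I_(d 0), i1 != i2 /\
  0 < act (srho rho) (sec rho s1 ks i1).1 (sec rho s1 ks i1).2 /\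
  0 < act (srho rho) (sec rho s1 ks i2).1 (sec rho s1 ks i2).2.
Proof.
move=> hd a2.
have kn : ks != [::] by case: ks a2.
set b := Ginv rho s1 ([::] : seq ((hT * fT) * {perm 'I_(d 0)})) one_pt.
have hb : b \in pts rho s1 ks by case: ks kn a2 => [|q ks] //= _ _; rewrite inE eqxx.
case Hall: (all (fun p : bpt => p 0 == b 0) (pts rho s1 ks)).
  exfalso; move/allP: Hall => Hall.
  have := undup_le1 (pts_const (fun p hp => (eqP (Hall p hp)))); rewrite /act in a2; lia.
move/negbT: Hall; rewrite -has_predC => /hasP [p hp /= pb0].
have hb0 := pts_first hd hb; have hp0 := pts_first hd hp.
exists (Ordinal hb0), (Ordinal hp0); split; first by rewrite -val_eqE /= eq_sym.
split; first exact: (act_sec_pos hb0 hb).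
exact: (act_sec_pos hp0 hp).
Qed.

Lemma mu_sec d (rho : hT -> Hd d) s1 (ks : seq ((hT * fT) * {perm 'I_(d 0)})) :
  0 < d 0 -> ks != [::] -> ~~ pureb s1 ks -> forall i : 'I_(d 0),
  mu (srho rho) (sec rho s1 ks i).1 (sec rho s1 ks i).2 < mu rho s1 ks.
Proof.
move=> hd kn np i.
have mw : mu rho s1 ks = (act rho s1 ks).*2 by rewrite /mu (negbTE np); case: ks kn np.
rewrite mw.
have ap := act_pos rho s1 kn.
case: (ltngtP (act rho s1 ks) 1) => a1; first lia.
  have [i1 [i2 [ij [p1 p2]]]] := act2_struct hd a1.
  have hs := act_sec_sum rho s1 ks.
  have hm := mu_le (srho rho) (sec rho s1 ks i).1 (sec rho s1 ks i).2.
  set F := fun k : 'I_(d 0) => act (srho rho) (sec rho s1 ks k).1 (sec rho s1 ks k).2.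
  have : F i < act rho s1 ks.
    case: (eqVneq i i1) => [->|ii1].
      have := sum2_le F ij; rewrite /F; lia.
    have := sum2_le F ii1; rewrite /F; lia.
  rewrite /F; lia.
case: (act1_struct kn a1 (ltn_ord i)) => [[cn cp]|ce].
  rewrite /mu; move: cn cp; case: (sec rho s1 ks i).2 => //= q r _ ->; lia.
by rewrite /mu ce; lia.
Qed.

End Code.

Lemma catL (T : Type) (s a b : seq T) : s ++ a = s ++ b -> a = b.
Proof. by elim: s => //= x s IH [] /IH. Qed.

Lemma flatten_pre (I : eqType) (l : seq I) (F G : I -> seq nat) r1 r2 :
  (forall i, i \in l -> forall r r', F i ++ r = G i ++ r' -> F i = G i) ->
  flatten [seq F i | i <- l] ++ r1 = flatten [seq G i | i <- l] ++ r2 ->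
  forall i, i \in l -> F i = G i.
Proof.
elim: l r1 r2 => [|x l IH] r1 r2 //= H e i.
rewrite -!catA in e.
have ex : F x = G x := H x (mem_head _ _) _ _ e.
rewrite ex in e; have e' := catL e.
rewrite inE => /orP [/eqP ->|hi] //.
by apply: (IH _ _ _ e') hi => j hj; apply: H; rewrite inE hj orbT.
Qed.

Lemma size_flatten_map (I : Type) (l : seq I) (F : I -> seq nat) :
  size (flatten [seq F i | i <- l]) = \sum_(i <- l) size (F i).
Proof. by elim: l => [|x l IH]; rewrite ?big_nil ?big_cons //= size_cat IH. Qed.

Lemma all_flatten_map (I : eqType) (l : seq I) (F : I -> seq nat) (P : pred nat) :
  (forall i, i \in l -> all P (F i)) -> all P (flatten [seq F i | i <- l]).
Proof.
elim: l => [|x l IH] //= H; rewrite all_cat H ?mem_head //=.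
by apply: IH => i hi; apply: H; rewrite inE hi orbT.
Qed.

Lemma sum_enum_ord n (G : 'I_n -> nat) : \sum_(i <- enum 'I_n) G i = \sum_(i < n) G i.
Proof. by rewrite big_enum. Qed.

Section Code2.
Variables (fT hT : finGroupType).

Lemma prk_inj n (s s' : {perm 'I_n}) : prk s = prk s' -> s = s'.
Proof. by move=> e; apply: enum_rank_inj; apply: val_inj. Qed.

Lemma keyk_inj (a a' : hT) (f f' : fT) : keyk a f = keyk a' f' -> a = a' /\ f = f'.
Proof.
rewrite /keyk => e.
have hf := ltn_ord (enum_rank f); have hf' := ltn_ord (enum_rank f').
have N0 : 0 < #|fT| by apply: leq_ltn_trans hf.
have e1 := congr1 (fun x => x %/ #|fT|) e; have e2 := congr1 (fun x => x %% #|fT|) e.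
rewrite /= !divnMDl // !divn_small // !addn0 in e1.
rewrite /= !modnMDl !modn_small // in e2.
by split; apply: enum_rank_inj; apply: val_inj.
Qed.

Section Fix.
Variables (d : nat -> nat) (rho : hT -> Hd d) (s1 : {perm 'I_(d 0)}).

Lemma code_nil n : code n.+1 rho s1 ([::] : seq ((hT * fT) * {perm 'I_(d 0)})) = [:: 3 * prk s1].
Proof. by []. Qed.

Lemma code_pure n (ks : seq ((hT * fT) * {perm 'I_(d 0)})) : ks != [::] -> pureb s1 ks ->
  code n.+1 rho s1 ks = [:: (3 * keyk (prodH ks) (prodF ks)).+1].
Proof. by case: ks => //= q ks _ ->. Qed.

Lemma code_split n (ks : seq ((hT * fT) * {perm 'I_(d 0)})) : ks != [::] -> ~~ pureb s1 ks ->
  code n.+1 rho s1 ks = (3 * prk (rootprod s1 ks)).+2 ::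
    flatten [seq code n (srho rho) (sec rho s1 ks i).1 (sec rho s1 ks i).2
            | i : 'I_(d 0) <- enum 'I_(d 0)].
Proof. by case: ks => //= q ks _ /negbTE ->. Qed.

End Fix.

Lemma code_inj n d (rho : hT -> Hd d) (s1 s1' : {perm 'I_(d 0)})
  (ks ks' : seq ((hT * fT) * {perm 'I_(d 0)})) r1 r2 :
  Hd_morph rho -> (forall j, 0 < d j) -> mu rho s1 ks < n -> mu rho s1' ks' < n ->
  code n rho s1 ks ++ r1 = code n rho s1' ks' ++ r2 ->
  code n rho s1 ks = code n rho s1' ks' /\ eeq d (weval rho s1 ks) (weval rho s1' ks').
Proof.
elim: n d rho s1 s1' ks ks' r1 r2 => [|n IH] d rho s1 s1' ks ks' r1 r2 Hm Hd mu1 mu2 //.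
have eeq_refl : forall e : elt fT, eeq d e e by move=> e x _.
case: (eqVneq ks [::]) => [->|kn]; case: (eqVneq ks' [::]) => [->|kn'].
- rewrite !code_nil /= => -[e _].
  have -> : s1 = s1' by apply: prk_inj; lia.
  by split.
- rewrite code_nil; case P': (pureb s1' ks').
    by rewrite code_pure //= => -[e]; lia.
  by rewrite code_split ?P' //= => -[e]; lia.
- rewrite code_nil; case P: (pureb s1 ks).
    by rewrite code_pure //= => -[e]; lia.
  by rewrite code_split ?P //= => -[e]; lia.
case P: (pureb s1 ks); case P': (pureb s1' ks').
- rewrite !code_pure //= => -[e _].
  have [ea ef] : prodH ks = prodH ks' /\ prodF ks = prodF ks' by apply: keyk_inj; lia.
  by rewrite !weval_pure // ea ef; split.
- by rewrite code_pure // code_split ?P' //= => -[e]; lia.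
- by rewrite code_split ?P // code_pure //= => -[e]; lia.
have np : ~~ pureb s1 ks by rewrite P.
have np' : ~~ pureb s1' ks' by rewrite P'.
rewrite !code_split //= => -[e et].
have et' : rootprod s1 ks = rootprod s1' ks' by apply: prk_inj; lia.
have hd0 := Hd 0.
have IHi : forall (i : 'I_(d 0)) r r',
    code n (srho rho) (sec rho s1 ks i).1 (sec rho s1 ks i).2 ++ r =
    code n (srho rho) (sec rho s1' ks' i).1 (sec rho s1' ks' i).2 ++ r' ->
    code n (srho rho) (sec rho s1 ks i).1 (sec rho s1 ks i).2 =
    code n (srho rho) (sec rho s1' ks' i).1 (sec rho s1' ks' i).2 /\
    eeq (sd d) (weval (srho rho) (sec rho s1 ks i).1 (sec rho s1 ks i).2)
               (weval (srho rho) (sec rho s1' ks' i).1 (sec rho s1' ks' i).2).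
  move=> i r r'; apply: IH.
  - exact: srho_morph.
  - by move=> j; apply: Hd.
  - by have := mu_sec rho hd0 kn np i; lia.
  - by have := mu_sec rho hd0 kn' np' i; lia.
have FG := flatten_pre (fun i hi r r' e => (IHi i r r' e).1) et.
split.
  by rewrite et'; congr (_ :: flatten _); apply/eq_in_map => i hi; apply: FG.
move=> x hx; rewrite (pcons_eta x).
have hi : x 0 < d 0 := hx 0.
have [e2 e1] := secP rho s1 ks hi (ptail x).
have [e2' e1'] := secP rho s1' ks' hi (ptail x).
have FGi := FG (Ordinal hi) (mem_enum _ _).
have := IHi (Ordinal hi) [::] [::]; rewrite !cats0 => /(_ FGi) [_ Heq].
have hx' : valid_pt (sd d) (ptail x) by move=> j; apply: hx.
have [E1 E2] := Heq _ hx'.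
rewrite e2 e2' e1 e1' !secst1 et'; split; first exact: E1.
by case => [|j] //=; apply: E2.
Qed.

Definition lam D d (rho : hT -> Hd d) (s1 : {perm 'I_(d 0)})
  (ks : seq ((hT * fT) * {perm 'I_(d 0)})) : nat :=
  if ks is [::] then 1 else if pureb s1 ks then 1 else (D.+1 * (act rho s1 ks).*2.-1).+1.

Lemma lam_le D d (rho : hT -> Hd d) s1 ks :
  lam D rho s1 ks <= (D.+1 * (act rho s1 ks).*2.-1).+1.
Proof. by rewrite /lam; case: ks => // q ks; case: ifP. Qed.

Lemma code_size n D d (rho : hT -> Hd d) (s1 : {perm 'I_(d 0)})
  (ks : seq ((hT * fT) * {perm 'I_(d 0)})) :
  (forall j, 0 < d j <= D) -> mu rho s1 ks < n -> size (code n rho s1 ks) <= lam D rho s1 ks.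
Proof.
elim: n d rho s1 ks => [|n IH] d rho s1 ks Hd mu1 //.
case: (eqVneq ks [::]) => [->|kn] //.
case P: (pureb s1 ks).
  by rewrite code_pure // /lam; case: ks kn P {mu1} => //= q r _ ->.
have np : ~~ pureb s1 ks by rewrite P.
have hd0 : 0 < d 0 by case/andP: (Hd 0).
have hD : d 0 <= D by case/andP: (Hd 0).
rewrite code_split // -cat1s size_cat size_flatten_map sum_enum_ord.
have -> : size [:: (3 * prk (rootprod s1 ks)).+2] = 1 by [].
have lw : lam D rho s1 ks = (D.+1 * (act rho s1 ks).*2.-1).+1 by rewrite /lam; move: kn P; case: (ks) => //= q r _ ->.
rewrite lw.
have IHi : forall i : 'I_(d 0),
  size (code n (srho rho) (sec rho s1 ks i).1 (sec rho s1 ks i).2) <=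
  lam D (srho rho) (sec rho s1 ks i).1 (sec rho s1 ks i).2.
  move=> i; apply: IH; first by move=> j; apply: Hd.
  by have := mu_sec rho hd0 kn np i; lia.
have ap := act_pos rho s1 kn.
case: (ltngtP (act rho s1 ks) 1) => a1; first lia.
  set a := act rho s1 ks.
  set F := fun k : 'I_(d 0) => act (srho rho) (sec rho s1 ks k).1 (sec rho s1 ks k).2.
  have hs : \sum_(k < d 0) F k <= a := act_sec_sum rho s1 ks.
  have [i1 [i2 [ij [p1 p2]]]] := act2_struct hd0 a1.
  have h2 : 2 <= \sum_(k < d 0) (0 < F k).
    by have := sum2_le (fun k => nat_of_bool (0 < F k)) ij; rewrite /= -/(F i1) -/(F i2) p1 p2.
  have hL : \sum_(i < d 0) size (code n (srho rho) (sec rho s1 ks i).1 (sec rho s1 ks i).2)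
            <= \sum_(k < d 0) (D.+1 * (F k).*2.-1).+1.
    apply: leq_sum => i _; apply: leq_trans (IHi i) _; exact: lam_le.
  have hsum : \sum_(k < d 0) (D.+1 * (F k).*2.-1).+1 + D.+1 * \sum_(k < d 0) (0 < F k)
              = (D.+1).*2 * \sum_(k < d 0) F k + \sum_(k < d 0) 1.
    rewrite big_distrr /= -big_split /= big_distrr /= -big_split /=.
    by apply: eq_bigr => k _; case: (F k) => [|f] /=; lia.
  have s1c : \sum_(k < d 0) 1 = d 0 by rewrite sum1_card card_ord.
  rewrite s1c in hsum.
  move: hsum hL h2 hs; set X := \sum_(k < d 0) _.+1; set Y := \sum_(k < d 0) _ ; set S := \sum_(k < d 0) F k.
  move=> hsum hL h2 hs.
  have k1 : D.+1 * 2 <= D.+1 * Y by apply: leq_mul.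
  have k2 : D.+1 * S <= D.+1 * a by apply: leq_mul.
  have k3 : D.+1 * a.*2.-1 + D.+1 = (D.+1 * a).*2.
    have a2 : 0 < a.*2 by rewrite double_gt0; lia.
    by rewrite -mulnSr prednK // doubleMr.
  have k4 : (D.+1).*2 * S = (D.+1 * S).*2 by rewrite doubleMl.
  lia.
have HI : forall i : 'I_(d 0),
  size (code n (srho rho) (sec rho s1 ks i).1 (sec rho s1 ks i).2) <= 1.
  move=> i; apply: leq_trans (IHi i) _.
  case: (act1_struct kn a1 (ltn_ord i)) => [[cn cp]|ce].
    by rewrite /lam; move: cn cp; case: (sec rho s1 ks i).2 => //= q r _ ->.
  by rewrite /lam ce.
have : \sum_(i < d 0) size (code n (srho rho) (sec rho s1 ks i).1 (sec rho s1 ks i).2)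
       <= \sum_(i < d 0) 1 by apply: leq_sum => i _; apply: HI.
rewrite sum1_card card_ord a1 /=; lia.
Qed.

Lemma code_sym n D m d (rho : hT -> Hd d) (s1 : {perm 'I_(d 0)})
  (ks : seq ((hT * fT) * {perm 'I_(d 0)})) :
  (forall j, d j <= D) -> #|hT| * #|fT| <= m ->
  all (fun x => x < 3 * (D`! + m) + 3) (code n rho s1 ks).
Proof.
move=> Hd Hm.
have hp : forall n0 (s : {perm 'I_n0}), n0 <= D -> prk s < D`!.
  move=> n0 s h; apply: (leq_trans _ (leq_fact h)); rewrite /prk -card_Sn; exact: ltn_ord.
have hk : forall (a : hT) (f : fT), keyk a f < m.
  move=> a f; apply: (leq_trans _ Hm); rewrite /keyk.
  have hx := ltn_ord (enum_rank a); have hy := ltn_ord (enum_rank f).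
  apply: (@leq_trans ((enum_rank a).+1 * #|fT|)); last by rewrite leq_mul2r hx orbT.
  by rewrite mulSn addnC ltn_add2r.
elim: n d rho s1 ks Hd => [|n IH] d rho s1 ks Hd //.
case: (eqVneq ks [::]) => [->|kn].
  by rewrite code_nil /=; have := hp _ s1 (Hd 0); lia.
case P: (pureb s1 ks).
  by rewrite code_pure //=; have := hk (prodH ks) (prodF ks); lia.
rewrite code_split ?P //= all_flatten_map ?andbT.
  by have := hp _ (rootprod s1 ks) (Hd 0); lia.
by move=> i _; apply: IH => j; apply: Hd.
Qed.

End Code2.

Definition pad (Lm A : nat) (s : seq nat) : Lm.-tuple 'I_A.+1 :=
  [tuple (inord (nth A s j) : 'I_A.+1) | j < Lm].

Lemma pad_inj Lm A (s s' : seq nat) : size s <= Lm -> size s' <= Lm ->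
  all (fun x => x < A) s -> all (fun x => x < A) s' -> pad Lm A s = pad Lm A s' -> s = s'.
Proof.
move=> hs hs' /allP as_ /allP as' e.
have nle : forall (u : seq nat) j, (forall x, x \in u -> x < A) -> nth A u j <= A.
  move=> u j hu; case: (ltnP j (size u)) => hj.
    by apply: ltnW; apply: hu; apply: mem_nth.
  by rewrite nth_default.
have E : forall j, nth A s j = nth A s' j.
  move=> j; case: (ltnP j Lm) => hj.
    have := congr1 (fun t => val (tnth t (Ordinal hj))) e.
    by rewrite /pad !tnth_mktuple /= !inordK // ltnS; apply: nle.
  by rewrite !nth_default // (leq_trans _ hj).
have hsz : size s = size s'.
  case: (ltngtP (size s) (size s')) => // h.
    have := E (size s); rewrite nth_default // => eA.
    have := as' _ (mem_nth A h); rewrite -eA ltnn //.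
  have := E (size s'); rewrite [nth A s' _]nth_default // => eA.
  have := as_ _ (mem_nth A h); rewrite eA ltnn //.
by apply: (eq_from_nth hsz) => j _; apply: E.
Qed.

Theorem mainTheorem5 (D m : nat) :
  exists C : nat,
    forall d : nat -> nat, (forall j, 2 <= d j <= D) ->
    forall (fT hT : finGroupType) (rho : hT -> Hd d),
      Hd_morph rho -> Hd_inj rho -> Hd_uniform rho ->
      #|hT| * #|fT| = m ->
      forall r : nat,
        exists (N : nat) (L : 'I_N -> elt fT),
          N <= C ^ maxn r 1 /\
          forall (s1 : {perm 'I_(d 0)}) (ks : seq ((hT * fT) * {perm 'I_(d 0)})),
            activity rho s1 ks <= r ->
            exists i : 'I_N, eeq d (weval rho s1 ks) (L i).
Proof.
pose A := 3 * (D`! + m) + 3.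
exists (A.+1 ^ (2 * D.+1)).
move=> d Hd fT hT rho Hm _ _ Hcard r.
have HdD : forall j, d j <= D by move=> j; case/andP: (Hd j).
have Hd0 : forall j, 0 < d j by move=> j; case/andP: (Hd j) => h _; apply: leq_trans h.
have Hd0D : forall j, 0 < d j <= D by move=> j; rewrite Hd0 HdD.
pose Lm := 2 * D.+1 * maxn r 1.
pose n := (2 * r).+1.
pose Wd := ({perm 'I_(d 0)} * seq ((hT * fT) * {perm 'I_(d 0)}))%type.
pose P (t : Lm.-tuple 'I_A.+1) (w : Wd) :=
  act rho w.1 w.2 <= r /\ pad Lm A (code n rho w.1 w.2) = t.
pose Lt (t : Lm.-tuple 'I_A.+1) : elt fT :=
  match excluded_middle_informative (exists w, P t w) with
  | left H => weval rho (proj1_sig (constructive_indefinite_description _ H)).1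
                        (proj1_sig (constructive_indefinite_description _ H)).2
  | right _ => eid fT
  end.
exists #|{: Lm.-tuple 'I_A.+1}|, (fun i => Lt (enum_val i)).
split.
  by rewrite card_tuple card_ord -expnM.
move=> s1 ks ha; rewrite activityE -/(act rho s1 ks) in ha.
have hsize : forall (s1' : {perm 'I_(d 0)}) (ks' : seq ((hT * fT) * {perm 'I_(d 0)})),
    act rho s1' ks' <= r ->
    size (code n rho s1' ks') <= Lm /\ all (fun x => x < A) (code n rho s1' ks') /\
    mu rho s1' ks' < n.
  move=> s1' ks' ha'; split; last split.
  - have mu' : mu rho s1' ks' < n by have := mu_le rho s1' ks'; rewrite /n; lia.
    apply: (leq_trans (code_size Hd0D mu')).
    apply: (leq_trans (lam_le _ _ _ _)); rewrite /Lm.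
    set a := act rho s1' ks' in ha' *.
    case: a ha' => [|a] ha' /=; first by rewrite muln0 /=; lia.
    have : maxn r 1 = r by apply/maxn_idPl; lia.
    move=> ->; nia.
  - by apply: code_sym; [exact: HdD | rewrite Hcard].
  - by have := mu_le rho s1' ks'; rewrite /n; lia.
exists (enum_rank (pad Lm A (code n rho s1 ks))).
rewrite enum_rankK /Lt.
case: excluded_middle_informative => [H|H]; last first.
  by exfalso; apply: H; exists (s1, ks).
case: (constructive_indefinite_description _ H) => [[s1' ks'] [ha' hp]] /=.
have [sz1 [sy1 mu1]] := hsize s1 ks ha.
have [sz2 [sy2 mu2]] := hsize s1' ks' ha'.
have ec := pad_inj sz1 sz2 sy1 sy2 (esym hp).
have := @code_inj fT hT n d rho s1 s1' ks ks' [::] [::] Hm Hd0 mu1 mu2.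
by rewrite !cats0 ec => /(_ erefl) [].
Qed.
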